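(* Let $\mathcal F$ be a proper filter on $\omega$ and consider the game $\mathfrak G(\mathrm{Fr},\omega,\mathcal F^+)$. Then (1) player I has a winning strategy if and only if $\mathcal F$ is not a weak Q-filter; (2) player II has a winning strategy if and only if $\mathcal F$ is $\omega$-diagonalizable.
   Context: A filter on $\omega$ is a family $\mathcal F\subseteq\mathcal P(\omega)$ closed under finite intersections and supersets and containing all cofinite sets; it is proper if all its members are infinite. $\mathcal F^+=\{X\subseteq\omega:\omega\setminus X\notin\mathcal F\}$. $\mathrm{Fr}$ is the family of cofinite subsets of $\omega$. $X\subseteq^*Y$ means $X\setminus Y$ is finite. Game $\mathfrak G(\mathcal X,\omega,\mathcal Z)$ (for $\mathcal X,\mathcal Z\subseteq\mathcal P(\omega)$): at each stage $k\in\omega$, player I chooses $X_k\in\mathcal X$ and player II responds with $n_k\in X_k$; II wins the play if $\{n_k:k\in\omega\}\in\mathcal Z$, otherwise I wins. $\mathcal F$ is a weak Q-filter if for every partition of $\omega$ into finite sets $\langle s_k:k\in\omega\rangle$ there is $X\in\mathcal F^+$ with $|X\cap s_k|\le1$ for all $k$. $\mathcal F$ is $\omega$-diagonalizable if there are infinite sets $X_n\subseteq\omega$ ($n\in\omega$) such that for every $Y\in\mathcal F$ there is $n$ with $X_n\subseteq^*Y$. *)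

(* Defs.v *)
From Stdlib Require Import Arith List.
Import ListNotations.

Definition subset_nat := nat -> Prop.

Definition finite_set (X : subset_nat) : Prop := exists N, forall m, X m -> m < N.
Definition infinite_set (X : subset_nat) : Prop := ~ finite_set X.
Definition cofinite (X : subset_nat) : Prop := finite_set (fun m => ~ X m).
Definition Fr : subset_nat -> Prop := cofinite.

Definition almost_subset (X Y : subset_nat) : Prop := finite_set (fun m => X m /\ ~ Y m).

Definition is_filter (F : subset_nat -> Prop) : Prop :=
  (forall X Y, F X -> F Y -> F (fun m => X m /\ Y m)) /\
  (forall X Y, F X -> (forall m, X m -> Y m) -> F Y) /\
  (forall X, cofinite X -> F X).

Definition proper_filter (F : subset_nat -> Prop) : Prop :=
  is_filter F /\ (forall X, F X -> infinite_set X).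

Definition Fplus (F : subset_nat -> Prop) : subset_nat -> Prop :=
  fun X => ~ F (fun m => ~ X m).

Definition prefix {A : Type} (u : nat -> A) (k : nat) : list A := map u (seq 0 k).

(* Game G(Xc, omega, Z): at stage k, I plays X_k in Xc, II answers n_k in X_k;
   II wins iff {n_k : k} in Z.
   A strategy for I maps the finite sequence of II's previous moves
   (I's own previous moves are determined by the strategy) to a move in Xc. *)
Definition I_has_winning_strategy (Xc Z : subset_nat -> Prop) : Prop :=
  exists sigma : list nat -> subset_nat,
    (forall s, Xc (sigma s)) /\
    (forall n : nat -> nat,
        (forall k, sigma (prefix n k) (n k)) ->
        ~ Z (fun m => exists k, n k = m)).

Definition II_has_winning_strategy (Xc Z : subset_nat -> Prop) : Prop :=
  exists tau : list subset_nat -> subset_nat -> nat,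
    (forall s X, Xc X -> X (tau s X)) /\
    (forall Xs : nat -> subset_nat,
        (forall k, Xc (Xs k)) ->
        Z (fun m => exists k, tau (prefix Xs k) (Xs k) = m)).

Definition finite_partition (s : nat -> subset_nat) : Prop :=
  (forall k, finite_set (s k)) /\
  (forall k l m, s k m -> s l m -> k = l) /\
  (forall m, exists k, s k m).

Definition weak_Q_filter (F : subset_nat -> Prop) : Prop :=
  forall s, finite_partition s ->
    exists X, Fplus F X /\
      (forall k a b, X a -> s k a -> X b -> s k b -> a = b).

Definition omega_diagonalizable (F : subset_nat -> Prop) : Prop :=
  exists Xs : nat -> subset_nat,
    (forall n, infinite_set (Xs n)) /\
    (forall Y, F Y -> exists n, almost_subset (Xs n) Y).

(* Main.v *)
Require Import Defs.
From Stdlib Require Import Arith Lia List Classical ClassicalEpsilon Cantor Bool.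
Import ListNotations.

Lemma not_finite_exists (P : subset_nat) :
  ~ finite_set P -> forall N, exists x, N <= x /\ P x.
Proof.
  intros H N. apply NNPP; intro C. apply H. exists N. intros m Pm.
  destruct (le_lt_dec N m) as [h|h]; [|exact h].
  exfalso; apply C; eauto.
Qed.

Lemma Fr_ge m : Fr (fun y => m <= y).
Proof. exists m. intros y h. lia. Qed.

Lemma Fplus_mono F (HF : is_filter F) (A B : subset_nat) :
  Fplus F A -> (forall x, A x -> B x) -> Fplus F B.
Proof.
  intros HA HAB HB. apply HA. destruct HF as [_ [Hsup _]].
  apply (Hsup _ _ HB). intros m h1 h2. apply h1, HAB, h2.
Qed.

Lemma Fplus_unbounded F (HF : is_filter F) (A : subset_nat) :
  Fplus F A -> forall N, exists x, N <= x /\ A x.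
Proof.
  intros HA N. apply NNPP; intro C. apply HA. destruct HF as [_ [_ Hcof]].
  apply Hcof. exists N. intros m h.
  destruct (le_lt_dec N m) as [h'|h']; [|exact h'].
  exfalso; apply h; intro Am; apply C; eauto.
Qed.

Lemma prefix_length {A} (u : nat -> A) k : length (prefix u k) = k.
Proof. unfold prefix. rewrite length_map, length_seq. reflexivity. Qed.

Definition pi (k : nat) : nat := fst (of_nat k).

Lemma pi_often n B : exists k, B <= k /\ pi k = n.
Proof.
  exists (to_nat (n, B)). split.
  - pose proof (to_nat_non_decreasing n B). lia.
  - unfold pi. rewrite cancel_of_to. reflexivity.
Qed.

Lemma part2_back F (HF : proper_filter F) :
  omega_diagonalizable F -> II_has_winning_strategy Fr (Fplus F).
Proof.
  intros [Xs [Hinf Hdiag]].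
  set (P := fun (l : list subset_nat) (X : subset_nat) (y : nat) =>
              X y /\ Xs (pi (length l)) y /\ length l <= y).
  exists (fun l X => epsilon (inhabits 0) (P l X)).
  assert (Hex : forall l X, Fr X -> exists y, P l X y).
  { intros l X [N HN].
    destruct (not_finite_exists _ (Hinf (pi (length l))) (N + length l)) as [y [hy1 hy2]].
    exists y. split; [|split; [exact hy2| lia]].
    apply NNPP; intro C. specialize (HN _ C). lia. }
  split.
  - intros s X HX. exact (proj1 (epsilon_spec _ _ (Hex s X HX))).
  - intros Ys HYs HFc.
    destruct (Hdiag _ HFc) as [n [B HB]].
    destruct (pi_often n B) as [k [hk1 hk2]].
    pose proof (epsilon_spec (inhabits 0) _ (Hex (prefix Ys k) (Ys k) (HYs k))) as [_ [h2 h3]].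
    rewrite prefix_length in h2, h3. rewrite hk2 in h2.
    set (y := epsilon _ _) in *.
    assert (y < B). { apply HB. split; [exact h2|]. intro C; apply C. exists k. reflexivity. }
    lia.
Qed.

Fixpoint enc (l : list nat) : nat :=
  match l with [] => 0 | a :: l' => S (to_nat (a, enc l')) end.

Lemma enc_inj l1 l2 : enc l1 = enc l2 -> l1 = l2.
Proof.
  revert l2; induction l1 as [|a l1 IH]; intros [|b l2]; cbn [enc]; try discriminate; auto.
  intro h0. assert (h : to_nat (a, enc l1) = to_nat (b, enc l2)) by congruence.
  apply (f_equal of_nat) in h. rewrite !cancel_of_to in h. injection h as -> h.
  f_equal. auto.
Qed.

Definition ge_set (m : nat) : subset_nat := fun y => m <= y.

Fixpoint Lseq (g : list nat -> nat) (k : nat) : list nat :=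
  match k with 0 => [] | S k' => Lseq g k' ++ [g (Lseq g k')] end.

Lemma Lseq_map g k : Lseq g k = map (fun i => g (Lseq g i)) (seq 0 k).
Proof.
  induction k as [|k IH]; [reflexivity|].
  cbn [Lseq]. rewrite seq_S, map_app, <- IH. reflexivity.
Qed.

Lemma part2_fwd F (HF : proper_filter F) :
  II_has_winning_strategy Fr (Fplus F) -> omega_diagonalizable F.
Proof.
  intros [tau [Hleg Hwin]].
  set (A := fun (t : list nat) x => exists m, tau (map ge_set t) (ge_set m) = x).
  exists (fun n x => (exists t, enc t = n /\ A t x) \/ ~ (exists t, enc t = n)).
  split.
  - intros n [N HN].
    destruct (classic (exists t, enc t = n)) as [[t ht]|ht].
    + set (x := tau (map ge_set t) (ge_set N)).
      assert (N <= x) by exact (Hleg _ _ (Fr_ge N)).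
      assert (x < N). { apply HN. left. exists t. split; [exact ht|]. exists N. reflexivity. }
      lia.
    + specialize (HN N (or_intror ht)). lia.
  - intros Y HY. apply NNPP; intro C.
    assert (Hg : forall t, exists m, ~ Y (tau (map ge_set t) (ge_set m))).
    { intro t. apply NNPP; intro C2. apply C. exists (enc t). exists 0.
      intros x [[[t' [ht' [m hm]]]|ht'] hY].
      - apply enc_inj in ht'. subst t'. exfalso. apply C2. exists m. rewrite hm. exact hY.
      - exfalso. apply ht'. eauto. }
    set (g := fun t => proj1_sig (constructive_indefinite_description _ (Hg t))).
    assert (Hgs : forall t, ~ Y (tau (map ge_set t) (ge_set (g t)))).
    { intro t. exact (proj2_sig (constructive_indefinite_description _ (Hg t))). }
    set (Ys := fun k => ge_set (g (Lseq g k))).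
    specialize (Hwin Ys (fun k => Fr_ge _)).
    apply (Hwin). apply ((proj1 (proj2 (proj1 HF))) Y); [exact HY|].
    intros x hx [k hk]. subst x. apply (Hgs (Lseq g k)).
    replace (prefix Ys k) with (map ge_set (Lseq g k)) in hx; [exact hx|].
    rewrite Lseq_map. unfold prefix, Ys. rewrite map_map. reflexivity.
Qed.

Lemma part1_back F (HF : proper_filter F) :
  ~ weak_Q_filter F -> I_has_winning_strategy Fr (Fplus F).
Proof.
  intro HnQ. unfold weak_Q_filter in HnQ.
  apply not_all_ex_not in HnQ as [s Hs].
  apply imply_to_and in Hs as [[Hfin [Hdisj Hcov]] Hno].
  exists (fun l m => forall x, In x l -> forall k, s k x -> ~ s k m).
  split.
  - intro l.
    assert (HB : exists N, forall m x k, In x l -> s k x -> s k m -> m < N).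
    { induction l as [|a l [N IH]].
      - exists 0. intros m x k [].
      - destruct (Hcov a) as [ka hka]. destruct (Hfin ka) as [Na HNa].
        exists (N + Na). intros m x k [->|hin] h1 h2.
        + rewrite (Hdisj _ _ _ h1 hka) in h2. specialize (HNa _ h2). lia.
        + specialize (IH _ _ _ hin h1 h2). lia. }
    destruct HB as [N HN]. exists N. intros m hm.
    destruct (le_lt_dec N m) as [h|h]; [|exact h]. exfalso. apply hm.
    intros x hx k h1 h2. specialize (HN _ _ _ hx h1 h2). lia.
  - intros n Hn HFp. apply Hno. eexists. split; [exact HFp|].
    intros k a b [i hi] ha [j hj] hb. subst a b.
    destruct (lt_eq_lt_dec i j) as [[h|h]|h].
    + exfalso. refine (Hn j (n i) _ k ha hb).
      unfold prefix. apply in_map. apply in_seq. lia.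
    + subst; reflexivity.
    + exfalso. refine (Hn i (n j) _ k hb ha).
      unfold prefix. apply in_map. apply in_seq. lia.
Qed.

Lemma fin_max (k : nat) : forall (b : list nat -> nat) (M : nat),
  exists N, forall l, length l <= k -> (forall x, In x l -> x < M) -> b l <= N.
Proof.
  induction k as [|k IH]; intros b M.
  - exists (b []). intros [|a l] hl _; simpl in hl; [lia|lia].
  - assert (Hin : forall M', exists N, forall a, a < M' -> forall l, length l <= k ->
               (forall x, In x l -> x < M) -> b (a :: l) <= N).
    { induction M' as [|M' [N0 IH0]].
      - exists 0. intros; lia.
      - destruct (IH (fun l => b (M' :: l)) M) as [N1 HN1].
        exists (N0 + N1). intros a ha l hl hx.
        destruct (Nat.eq_dec a M') as [->|hne].
        + specialize (HN1 l hl hx). simpl in HN1. lia.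
        + specialize (IH0 a ltac:(lia) l hl hx). lia. }
    destruct (Hin M) as [N HN]. exists (b [] + N).
    intros [|a l] hl hx; [lia|].
    simpl in hl. specialize (HN a (hx a (or_introl eq_refl)) l ltac:(lia)
       (fun x h => hx x (or_intror h))). lia.
Qed.

Lemma least_ex (P : nat -> Prop) : (exists x, P x) -> exists x, P x /\ forall y, P y -> x <= y.
Proof.
  intros [x0 h0]. induction x0 as [x0 IH] using (well_founded_induction lt_wf).
  destruct (classic (exists y, y < x0 /\ P y)) as [[y [hy py]]|hn].
  - exact (IH y hy py).
  - exists x0. split; [exact h0|]. intros y py.
    destruct (le_lt_dec x0 y); [assumption|]. exfalso; eauto.
Qed.

Section Enum.
Variable P : nat -> Prop.
Hypothesis Hunb : forall N, exists x, N <= x /\ P x.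

Lemma nxt_ex a : exists x, (P x /\ a <= x) /\ forall y, P y /\ a <= y -> x <= y.
Proof. apply least_ex. destruct (Hunb a) as [x [h1 h2]]. eauto. Qed.

Definition nxt a : nat := proj1_sig (constructive_indefinite_description _ (nxt_ex a)).
Lemma nxt_spec a : (P (nxt a) /\ a <= nxt a) /\ forall y, P y /\ a <= y -> nxt a <= y.
Proof. exact (proj2_sig (constructive_indefinite_description _ (nxt_ex a))). Qed.

Fixpoint en (j : nat) : nat := match j with 0 => nxt 0 | S j' => nxt (S (en j')) end.

Lemma en_P j : P (en j).
Proof. destruct j; simpl; apply nxt_spec. Qed.

Lemma en_lt j : en j < en (S j).
Proof. simpl. pose proof (nxt_spec (S (en j))). lia. Qed.

Lemma en_mono i j : i <= j -> en i <= en j.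
Proof. induction 1; [lia|]. pose proof (en_lt m). lia. Qed.

Lemma en_ge j : j <= en j.
Proof. induction j; [lia|]. pose proof (en_lt j). lia. Qed.

Lemma en_cover x : P x -> exists i, en i = x.
Proof.
  intro px.
  assert (H : forall j, x <= en j -> exists i, en i = x).
  { induction j as [|j IH]; intro hj.
    - exists 0. pose proof (proj2 (nxt_spec 0) x (conj px (Nat.le_0_l _))).
      simpl in *. lia.
    - destruct (le_lt_dec x (en j)) as [h|h]; [auto|].
      exists (S j). pose proof (proj2 (nxt_spec (S (en j))) x (conj px h)).
      simpl in *. lia. }
  apply (H x), en_ge.
Qed.
End Enum.

Fixpoint mseq (H : nat -> nat -> nat) (k : nat) : nat :=
  match k with 0 => 0 | S k' => Nat.max (S (mseq H k')) (H k' (mseq H k')) end.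

Lemma mseq_S H k : mseq H k < mseq H (S k).
Proof. cbn [mseq]. pose proof (Nat.le_max_l (S (mseq H k)) (H k (mseq H k))). lia. Qed.

Lemma mseq_mono H i j : i <= j -> mseq H i <= mseq H j.
Proof. induction 1; [lia|]. pose proof (mseq_S H m). lia. Qed.

Lemma mseq_smono H i j : i < j -> mseq H i < mseq H j.
Proof. intro h. pose proof (mseq_S H i). pose proof (mseq_mono H (S i) j h). lia. Qed.

Lemma mseq_block H x : exists k, mseq H k <= x < mseq H (S k).
Proof.
  induction x as [|x [k hk]].
  - exists 0. pose proof (mseq_S H 0). simpl in *. lia.
  - destruct (Nat.eq_dec (S x) (mseq H (S k))) as [e|e].
    + exists (S k). pose proof (mseq_S H (S k)). lia.
    + exists k. lia.
Qed.

Lemma mseq_H H k : H k (mseq H k) <= mseq H (S k).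
Proof. cbn [mseq]. apply Nat.le_max_r. Qed.

Lemma part1_fwd F (HF : proper_filter F) :
  I_has_winning_strategy Fr (Fplus F) -> ~ weak_Q_filter F.
Proof.
  intros [sigma [Hleg Hwin]] HQ.
  destruct HF as [[Hint [Hsup Hcof]] Hprop].
  assert (HFf : is_filter F) by (repeat split; assumption).
  assert (Hb : forall s, exists N, forall y, N <= y -> sigma s y).
  { intro s. destruct (Hleg s) as [N HN]. exists N. intros y hy.
    apply NNPP; intro C. specialize (HN y C). lia. }
  set (bnd := fun s => proj1_sig (constructive_indefinite_description _ (Hb s))).
  assert (Hbnd : forall s y, bnd s <= y -> sigma s y).
  { intro s. exact (proj2_sig (constructive_indefinite_description _ (Hb s))). }
  assert (HHex : forall k M, exists N, forall l, length l <= k -> (forall x, In x l -> x < M) -> bnd l <= N)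
    by (intros; apply fin_max).
  set (H := fun k M => proj1_sig (constructive_indefinite_description _ (HHex k M))).
  assert (HH : forall k M l, length l <= k -> (forall x, In x l -> x < M) -> bnd l <= H k M).
  { intros k M. exact (proj2_sig (constructive_indefinite_description _ (HHex k M))). }
  set (m := mseq H).
  set (blk := fun k x => m k <= x < m (S k)).
  assert (Hpart : finite_partition blk).
  { split; [|split].
    - intro k. exists (m (S k)). intros x hx. apply hx.
    - intros k l x [h1 h2] [h3 h4].
      destruct (lt_eq_lt_dec k l) as [[h|h]|h]; [|exact h|].
      + pose proof (mseq_mono H (S k) l h). unfold m in *. lia.
      + pose proof (mseq_mono H (S l) k h). unfold m in *. lia.
    - intro x. apply mseq_block. }
  destruct (HQ blk Hpart) as [X [HX Hsel]].
  set (Xb := fun b x => X x /\ exists k, Nat.even k = b /\ blk k x).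
  assert (Hpar : exists b, Fplus F (Xb b)).
  { apply NNPP; intro C.
    assert (h1 : F (fun x => ~ Xb true x)) by (apply NNPP; intro C1; apply C; eauto).
    assert (h2 : F (fun x => ~ Xb false x)) by (apply NNPP; intro C1; apply C; eauto).
    apply HX. apply (Hsup _ _ (Hint _ _ h1 h2)).
    intros x [n1 n2] hx. destruct (Hpart) as [_ [_ Hc]]. destruct (Hc x) as [k hk].
    destruct (Nat.even k) eqn:E; [apply n1|apply n2]; split; eauto. }
  destruct Hpar as [b Hb'].
  set (X' := fun x => Xb b x /\ m 1 <= x).
  assert (HX' : Fplus F X').
  { intro C. apply Hb'. apply (Hsup _ _ (Hint _ _ C (Hcof _ (Fr_ge (m 1))))).
    intros x [h1 h2] h3. apply h1. split; assumption. }
  assert (Hgap : forall x y, X' x -> X' y -> x < y -> exists k, x < m (S k) /\ m (S (S k)) <= y).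
  { intros x y [[hXx [k [ek bk]]] _] [[hXy [l [el bl]]] _] hxy.
    exists k. split; [apply bk|].
    destruct (lt_eq_lt_dec l k) as [[h|h]|h].
    - pose proof (mseq_mono H (S l) k h). unfold blk, m in *. lia.
    - subst l. pose proof (Hsel k x y hXx bk hXy bl). lia.
    - destruct (Nat.eq_dec l (S k)) as [->|hne].
      + rewrite Nat.even_succ, <- Nat.negb_even, ek in el. destruct b; discriminate.
      + pose proof (mseq_mono H (S (S k)) l ltac:(lia)). unfold blk, m in *. lia. }
  pose proof (Fplus_unbounded F HFf X' HX') as Hunb.
  set (e := en X' Hunb).
  assert (Hinv : forall j, m (S j) <= e j).
  { induction j as [|j IH].
    - exact (proj2 (en_P X' Hunb 0)).
    - destruct (Hgap (e j) (e (S j)) (en_P X' Hunb j) (en_P X' Hunb (S j)) (en_lt X' Hunb j))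
        as [k [hk1 hk2]].
      assert (j < k).
      { destruct (le_lt_dec k j) as [h|h]; [|exact h].
        pose proof (mseq_mono H (S k) (S j) ltac:(lia)). unfold m in *. lia. }
      pose proof (mseq_mono H (S (S j)) (S (S k)) ltac:(lia)). unfold m in *. lia. }
  apply (Hwin e).
  - intros [|i].
    + apply Hbnd. pose proof (HH 0 (m 0) [] (le_n 0) (fun x h => match h with end)).
      pose proof (mseq_H H 0). pose proof (Hinv 0). unfold prefix, m in *. simpl in *. lia.
    + destruct (Hgap (e i) (e (S i)) (en_P X' Hunb i) (en_P X' Hunb (S i)) (en_lt X' Hunb i))
        as [k [hk1 hk2]].
      assert (i < k).
      { pose proof (Hinv i). destruct (le_lt_dec k i) as [h|h]; [|exact h].
        pose proof (mseq_mono H (S k) (S i) ltac:(lia)). unfold m in *. lia. }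
      apply Hbnd.
      assert (bnd (prefix e (S i)) <= H (S k) (m (S k))).
      { apply HH.
        - rewrite prefix_length. lia.
        - intros x hx. unfold prefix in hx. apply in_map_iff in hx as [l [<- hl]].
          apply in_seq in hl. pose proof (en_mono X' Hunb l i ltac:(lia)). unfold e in *. lia. }
      pose proof (mseq_H H (S k)). unfold m in *. lia.
  - apply (Fplus_mono F HFf X' _ HX'). intros x hx. apply (en_cover X' Hunb x hx).
Qed.

Theorem theorem2p2 (F : subset_nat -> Prop) (HF : proper_filter F) :
  (I_has_winning_strategy Fr (Fplus F) <-> ~ weak_Q_filter F) /\
  (II_has_winning_strategy Fr (Fplus F) <-> omega_diagonalizable F).
Proof.
  split; split.
  - apply part1_fwd; exact HF.
  - apply part1_back; exact HF.
  - apply part2_fwd; exact HF.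
  - apply part2_back; exact HF.
Qed.
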